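(* If $G=(V,E)$ is weakly observable and $|V|\ge2$, then for any player algorithm and any time horizon $T$ there exists a sequence of loss functions $\ell_1,\dots,\ell_T:V\to[0,1]$ such that the player's expected regret in the online learning problem with feedback graph $G$ is at least $\tfrac18 T^{2/3}$.
   Context: Let $G=(V,E)$ be a directed graph (self-loops allowed), $N^{\mathrm{in}}(i)=\{j:(j,i)\in E\}$, $N^{\mathrm{out}}(i)=\{j:(i,j)\in E\}$. A vertex $i$ is observable if $N^{\mathrm{in}}(i)\ne\emptyset$; strongly observable if $i\in N^{\mathrm{in}}(i)$ or $V\setminus\{i\}\subseteq N^{\mathrm{in}}(i)$ (or both); $G$ is weakly observable if every vertex is observable but not every vertex is strongly observable. Online learning with feedback graph $G$: the environment fixes in advance losses $\ell_t:V\to[0,1]$; on round $t$ the player chooses (possibly randomly) $I_t\in V$ based on past observations, incurs $\ell_t(I_t)$, and observes only $\{(j,\ell_t(j)):j\in N^{\mathrm{out}}(I_t)\}$. Expected regret: $\mathbb{E}[\sum_{t=1}^T\ell_t(I_t)]-\min_{i\in V}\sum_{t=1}^T\ell_t(i)$. *)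

(* Defs.v *)
From HB Require Import structures.
From mathcomp Require Import all_boot all_order all_algebra.
From mathcomp Require Import reals exp.
Set Implicit Arguments. Unset Strict Implicit. Unset Printing Implicit Defensive.
Import Order.TTheory GRing.Theory Num.Theory.
Local Open Scope ring_scope.

Section FeedbackGraph.
Variables (V : finType) (E : rel V).

Definition N_in (i : V) : {set V} := [set j | E j i].
Definition N_out (i : V) : {set V} := [set j | E i j].

Definition observable (i : V) : bool := N_in i != set0.

Definition strongly_observable (i : V) : bool :=
  (i \in N_in i) || ([set: V] :\ i \subset N_in i).

Definition weakly_observable_graph : bool :=
  [forall i, observable i] && ~~ [forall i, strongly_observable i].

Variable R : realType.

Definition observation (l : V -> R) (i : V) : seq (V * R) :=
  [seq (j, l j) | j <- enum V & E i j].

Definition history := seq (V * seq (V * R)).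

(* A (randomized) player algorithm: given the past history, a probability
   distribution over the vertex to play next (behavioral strategy). *)
Definition is_player (alg : history -> V -> R) : Prop :=
  (forall h i, 0 <= alg h i) /\ (forall h, \sum_(i : V) alg h i = 1).

Variable T : nat.
Variable losses : 'I_T -> V -> R.

Definition is_loss_seq : Prop := forall t i, 0 <= losses t i <= 1.

Definition hist_of (a : {ffun 'I_T -> V}) (t : 'I_T) : history :=
  [seq (a s, observation (losses s) (a s)) | s : 'I_T <- enum 'I_T & (s < t)%N].

Definition prob_actions (alg : history -> V -> R) (a : {ffun 'I_T -> V}) : R :=
  \prod_(t < T) alg (hist_of a t) (a t).

Definition expected_loss (alg : history -> V -> R) : R :=
  \sum_(a : {ffun 'I_T -> V}) prob_actions alg a * \sum_(t < T) losses t (a t).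

Definition cumulative_loss (i : V) : R := \sum_(t < T) losses t i.

(* Expected regret against the fixed comparator i; the expected regret is
   the maximum of this quantity over i. *)
Definition regret_against (alg : history -> V -> R) (i : V) : R :=
  expected_loss alg - cumulative_loss i.

End FeedbackGraph.

(* Main.v *)
Require Import Defs.
From HB Require Import structures.
From mathcomp Require Import all_boot all_order all_algebra.
From mathcomp Require Import reals exp.
From mathcomp Require Import ring lra.
Set Implicit Arguments. Unset Strict Implicit. Unset Printing Implicit Defensive.
Import Order.TTheory GRing.Theory Num.Theory.
Local Open Scope ring_scope.

Section Adapt.
Variables (R : realType) (X : finType) (T : nat) (x0 : X).
Implicit Types (z : {ffun 'I_T -> X}).
Local Notation FF := {ffun 'I_T -> X}.

Definition upd z (k : 'I_T) (x : X) : {ffun 'I_T -> X} :=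
  [ffun t => if t == k then x else z t].

Definition sw (x v : X) : X := if v == x0 then x else if v == x then x0 else v.

Lemma swK x : involutive (sw x).
Proof.
move=> v; rewrite /sw.
case: (eqVneq v x0) => [->|hv]; first by rewrite eqxx; case: (eqVneq x x0).
case: (eqVneq v x) => [->|hvx]; first by rewrite eqxx.
by rewrite (negbTE hv) (negbTE hvx).
Qed.

Lemma upd_id z k : upd z k (z k) = z.
Proof. by apply/ffunP => t; rewrite ffunE; case: eqP => // ->. Qed.

Lemma upd_upd z k x y : upd (upd z k y) k x = upd z k x.
Proof. by apply/ffunP => t; rewrite !ffunE; case: eqP. Qed.

Lemma upd_k z k x : upd z k x k = x.
Proof. by rewrite ffunE eqxx. Qed.

Lemma swap_sum (k : 'I_T) (Phi : {ffun 'I_T -> X} -> R) :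
  \sum_(z : FF) Phi z = \sum_(z : FF) (z k == x0)%:R * \sum_x Phi (upd z k x).
Proof.
symmetry.
under eq_bigr do rewrite big_distrr /=.
rewrite exchange_big /=.
have H x : \sum_(z : FF) (z k == x0)%:R * Phi (upd z k x) = \sum_(z : FF) (z k == x)%:R * Phi z.
  pose s z := upd z k (sw x (z k)).
  have sK : involutive s.
    move=> z; rewrite /s upd_upd upd_k swK upd_id //.
  rewrite (reindex_inj (inv_inj sK)) /=.
  apply: eq_bigr => z _; rewrite /s upd_k upd_upd.
  rewrite /sw; case: (eqVneq (z k) x0) => [hz|hz].
    case: (eqVneq x x0) => [hx|hx].
      by rewrite hx -hz eqxx upd_id.
    by rewrite hz eq_sym (negbTE hx) !mul0r.
  case: (eqVneq (z k) x) => [hzx|hzx].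
    by rewrite eqxx -hzx upd_id.
  by rewrite (negbTE hz) !mul0r.
under eq_bigr do rewrite H.
rewrite exchange_big /=; apply: eq_bigr => z _.
rewrite -big_distrl /=.
rewrite (bigD1 (z k)) //= eqxx big1 ?addr0 ?mul1r // => x hx.
by rewrite eq_sym (negbTE hx).
Qed.


Variable K : 'I_T -> FF -> X -> R.
Definition pin (k : nat) z : R := \prod_(t : 'I_T | (k <= t)%N) (z t == x0)%:R.
Definition Pk (k : nat) z : R := (\prod_(t : 'I_T | (t < k)%N) K t z (z t)) * pin k z.
Definition mu z : R := \prod_(t : 'I_T) K t z (z t).
Definition adapted := forall (t : 'I_T) z z',
  (forall s : 'I_T, (s < t)%N -> z s = z' s) -> forall x, K t z x = K t z' x.
Definition normed := forall t z, \sum_x K t z x = 1.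
Definition dep_lt (k : nat) (G : FF -> R) := forall z z',
  (forall s : 'I_T, (s < k)%N -> z s = z' s) -> G z = G z'.

Lemma prod_ltS (k : 'I_T) (F : 'I_T -> R) :
  \prod_(t : 'I_T | (t < k.+1)%N) F t = F k * \prod_(t : 'I_T | (t < k)%N) F t.
Proof.
rewrite (bigD1 k) //=; congr (_ * _); apply: eq_bigl => t.
by rewrite ltnS -val_eqE /= ltn_neqAle andbC.
Qed.

Lemma prod_geS (k : 'I_T) (F : 'I_T -> R) :
  \prod_(t : 'I_T | (k <= t)%N) F t = F k * \prod_(t : 'I_T | (k.+1 <= t)%N) F t.
Proof.
rewrite (bigD1 k) //=; congr (_ * _); apply: eq_bigl => t.
by rewrite -val_eqE /= ltn_neqAle eq_sym andbC.
Qed.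

Lemma step (k : 'I_T) G : adapted ->
  \sum_(z : FF) Pk k.+1 z * G z = \sum_(z : FF) Pk k z * \sum_x K k z x * G (upd z k x).
Proof.
move=> hK; rewrite (swap_sum k); apply: eq_bigr => z _.
rewrite !big_distrr; apply: eq_bigr => x _ /=; rewrite !mulrA; congr (_ * _).
rewrite /Pk /pin prod_ltS prod_geS upd_k.
rewrite (hK k (upd z k x) z); last by move=> s hs; rewrite ffunE ifN // -val_eqE /= neq_ltn hs.
have -> : \prod_(t : 'I_T | (t < k)%N) K t (upd z k x) (upd z k x t) =
          \prod_(t : 'I_T | (t < k)%N) K t z (z t).
  apply: eq_bigr => t ht; rewrite ffunE ifN; last by rewrite -val_eqE /= neq_ltn ht.
  apply: hK => s hs; rewrite ffunE ifN // -val_eqE /= neq_ltn (ltn_trans hs ht).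
  done.
have -> : \prod_(t : 'I_T | (k.+1 <= t)%N) (upd z k x t == x0)%:R =
          \prod_(t : 'I_T | (k.+1 <= t)%N) (z t == x0)%:R :> R.
  apply: eq_bigr => t ht; rewrite ffunE ifN //.
  by rewrite -val_eqE /= neq_ltn ht orbT.
ring.
Qed.


Lemma Pk_T z : Pk T z = mu z.
Proof.
rewrite /Pk /pin [X in _ * X]big_pred0 => [|t]; last by rewrite leqNgt ltn_ord.
by rewrite mulr1; apply: eq_bigl => t; rewrite ltn_ord.
Qed.

Lemma Pk0 z : Pk 0 z = \prod_(t : 'I_T) (z t == x0)%:R.
Proof. by rewrite /Pk big_pred0 // mul1r /pin. Qed.

Lemma sum_Pk0 : \sum_(z : FF) Pk 0 z = 1.
Proof.
under eq_bigr do rewrite Pk0.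
rewrite -(bigA_distr_bigA (fun (t : 'I_T) (x : X) => (x == x0)%:R : R)) /=.
apply: big1 => t _; rewrite (bigD1 x0) //= eqxx big1 ?addr0 // => x hx.
by rewrite (negbTE hx).
Qed.

Hypothesis hK : adapted.
Hypothesis hN : normed.

Lemma drop_gen n : forall k, (k + n = T)%N -> forall G, dep_lt k G ->
  \sum_(z : FF) mu z * G z = \sum_(z : FF) Pk k z * G z.
Proof.
elim: n => [|n IH] k hkn G hG.
  by rewrite addn0 in hkn; subst k; apply: eq_bigr => z _; rewrite Pk_T.
have hk : (k < T)%N by rewrite -hkn addnS ltnS leq_addr.
rewrite (IH k.+1) ?addSnnS //; last first.
  move=> z z' hz; apply: hG => s hs; apply: hz; exact: ltnW.
have -> := step (Ordinal hk) G hK; apply: eq_bigr => z _ /=; congr (_ * _).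
rewrite (eq_bigr (fun x => K (Ordinal hk) z x * G z)); last first.
  move=> x _; congr (_ * _); apply: hG => s hs; rewrite ffunE ifN //.
  by rewrite -val_eqE /= neq_ltn hs.
by rewrite -big_distrl /= hN mul1r.
Qed.

Lemma drop k : (k <= T)%N -> forall G, dep_lt k G ->
  \sum_(z : FF) mu z * G z = \sum_(z : FF) Pk k z * G z.
Proof. move=> hk; apply: (drop_gen (n := T - k)); exact: subnKC. Qed.

Lemma mass : \sum_(z : FF) mu z = 1.
Proof.
have := drop (leq0n T) (G := fun _ => 1) (fun _ _ _ => erefl).
under eq_bigr do rewrite mulr1.
under [X in _ = X -> _]eq_bigr do rewrite mulr1.
by move=> ->; exact: sum_Pk0.
Qed.

Lemma tower (t : 'I_T) G (psi : X -> R) : dep_lt t G ->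
  \sum_(z : FF) mu z * (G z * psi (z t)) =
  \sum_(z : FF) mu z * (G z * \sum_x K t z x * psi x).
Proof.
move=> hG.
have h1 := @drop t.+1 (ltn_ord t) (fun z => G z * psi (z t)).
have h2 := @drop t (ltnW (ltn_ord t)) (fun z => G z * \sum_x K t z x * psi x).
rewrite h1; last first.
  move=> z z' hz; rewrite (hG z z'); last by move=> s hs; apply: hz; exact: ltnW.
  by rewrite hz.
rewrite h2; last first.
  move=> z z' hz; rewrite (hG z z' hz); congr (_ * _); apply: eq_bigr => x _.
  by rewrite (hK hz).
rewrite (step t _ hK); apply: eq_bigr => z _; congr (_ * _).
rewrite big_distrr; apply: eq_bigr => x _ /=.
rewrite upd_k (hG (upd z t x) z); first by ring.
by move=> s hs; rewrite ffunE ifN // -val_eqE /= neq_ltn hs.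
Qed.

Lemma tower_eq (t : 'I_T) (psi1 psi2 : X -> R) :
  (forall z, \sum_x K t z x * psi1 x = \sum_x K t z x * psi2 x) ->
  \sum_(z : FF) mu z * psi1 (z t) = \sum_(z : FF) mu z * psi2 (z t).
Proof.
move=> h.
have e1 := @tower t (fun _ => 1) psi1 (fun _ _ _ => erefl).
have e2 := @tower t (fun _ => 1) psi2 (fun _ _ _ => erefl).
cbv beta in e1, e2.
transitivity (\sum_(z : FF) mu z * (1 * psi1 (z t))).
  by apply: eq_bigr => z _; rewrite mul1r.
rewrite e1.
transitivity (\sum_(z : FF) mu z * (1 * psi2 (z t))); last first.
  by apply: eq_bigr => z _; rewrite mul1r.
by rewrite e2; apply: eq_bigr => z _; rewrite h.
Qed.

End Adapt.

Section Cmp.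
Variables (R : realType) (X : finType) (T : nat) (x0 : X) (Y : eqType) (q : X -> Y).
Local Notation FF := {ffun 'I_T -> X}.
Variables K K' : 'I_T -> FF -> X -> R.
Definition qadapted (K0 : 'I_T -> FF -> X -> R) := forall (t : 'I_T) (z z' : FF),
  (forall s : 'I_T, (s < t)%N -> q (z s) = q (z' s)) -> forall x, K0 t z x = K0 t z' x.
Hypothesis hqK : qadapted K.
Hypothesis hqK' : qadapted K'.
Hypothesis hpush : forall t z (phi : X -> R), (forall x x', q x = q x' -> phi x = phi x') ->
  \sum_x K t z x * phi x = \sum_x K' t z x * phi x.

Definition qinv (G : FF -> R) := forall z z' : FF, (forall s, q (z s) = q (z' s)) -> G z = G z'.

Lemma qad_ad K0 : qadapted K0 -> adapted K0.
Proof. by move=> h t z z' hz; apply: h => s hs; rewrite hz. Qed.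

Lemma cmp_Pk k : (k <= T)%N -> forall G, qinv G ->
  \sum_(z : FF) Pk x0 K k z * G z = \sum_(z : FF) Pk x0 K' k z * G z.
Proof.
elim: k => [|k IH] hk G hG.
  by apply: eq_bigr => z _; rewrite !Pk0.
rewrite (step x0 (Ordinal hk) G (qad_ad hqK)) (step x0 (Ordinal hk) G (qad_ad hqK')) /=.
have hH : forall z, \sum_x K (Ordinal hk) z x * G (upd z (Ordinal hk) x) =
                  \sum_x K' (Ordinal hk) z x * G (upd z (Ordinal hk) x).
  move=> z; apply: hpush => x x' hx; apply: hG => s; rewrite !ffunE.
  by case: ifP.
under eq_bigr do rewrite hH.
apply: IH; first exact: ltnW.
move=> z z' hz; apply: eq_bigr => x _; congr (_ * _).
  by apply: hqK' => s _; exact: hz.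
by apply: hG => s; rewrite !ffunE; case: ifP.
Qed.

Lemma cmp G : qinv G ->
  \sum_(z : FF) mu K z * G z = \sum_(z : FF) mu K' z * G z.
Proof.
move=> hG; have := cmp_Pk (leqnn T) hG.
under eq_bigr do rewrite Pk_T.
by under [in X in _ = X -> _]eq_bigr do rewrite Pk_T.
Qed.

End Cmp.

Section RealFacts.
Variable R : realType.

Lemma ln_le_sub1 (r : R) : 0 < r -> ln r <= r - 1.
Proof.
move=> hr; have := @le_ln1Dx R (r - 1).
have -> : 1 + (r - 1) = r by ring.
by apply; lra.
Qed.

Lemma ln_ge_1sub (r : R) : 0 < r -> r - 1 <= r * ln r.
Proof.
move=> hr; have hi : 0 < r^-1 by rewrite invr_gt0.
have := ln_le_sub1 hi; rewrite lnV ?posrE // => h.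
have : r * (- ln r) <= r * (r^-1 - 1) by rewrite ler_pM2l.
rewrite mulrBr mulfV ?gt_eqF //; lra.
Qed.

Lemma key_ineq (r : R) : 0 < r ->
  (r - 1) ^+ 2 <= (r + 1) * ((r - 1) * ln r) /\ 0 <= (r - 1) * ln r.
Proof.
move=> hr; have h1 := ln_le_sub1 hr; have h2 := ln_ge_1sub hr.
have hm : 0 <= (r - 1) * ln r.
  case: (lerP 1 r) => h.
    apply: mulr_ge0; first lra.
    by apply: ln_ge0.
  apply: mulr_le0; first lra.
  by apply: ln_le0; lra.
split=> //.
case: (lerP 1 r) => h.
  have : (r - 1) * (r - 1) <= (r - 1) * (r * ln r) by apply: ler_wpM2l; lra.
  nra.
have : (r - 1) * (r - 1) <= (r - 1) * ln r.
  by rewrite ler_wnM2l //; lra.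
nra.
Qed.

Lemma pw (p0 r lam : R) : 0 <= p0 -> 0 < r -> 0 < lam ->
  `|p0 * r - p0| <= (lam * (p0 * r + p0) + (p0 * r - p0) * ln r / lam) / 2.
Proof.
move=> hp hr hl; have [hk hm] := key_ineq hr.
set m := (r - 1) * ln r in hk hm.
have -> : (p0 * r - p0) * ln r / lam = p0 * (m / lam) by rewrite /m; field; lra.
have -> : p0 * r - p0 = p0 * (r - 1) by ring.
rewrite normrM ger0_norm //.
set u := lam * (r + 1); set vv := m / lam.
have hu : 0 <= u by rewrite /u; apply: mulr_ge0; lra.
have hv : 0 <= vv by rewrite /vv divr_ge0 // ltW.
have huv : u * vv = (r + 1) * m by rewrite /u /vv; field; lra.
have hd : `|r - 1| <= (u + vv) / 2.
  have hsq : `|r - 1| ^+ 2 <= u * vv by rewrite huv real_normK ?num_real.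
  have hn := normr_ge0 (r - 1).
  have hs : `|r - 1| ^+ 2 <= ((u + vv) / 2) ^+ 2.
    apply: (le_trans hsq); have := sqr_ge0 (u - vv); rewrite !expr2; lra.
  by rewrite -ler_sqr // nnegrE; apply: divr_ge0; lra.
have -> : lam * (p0 * r + p0) = p0 * u by rewrite /u; ring.
have : p0 * `|r - 1| <= p0 * ((u + vv) / 2) by rewrite ler_wpM2l.
lra.
Qed.

End RealFacts.

Lemma hist_of_eq (R : realType) (V : finType) (E : rel V) (T : nat)
   (l l' : 'I_T -> V -> R) (a a' : {ffun 'I_T -> V}) (t : 'I_T) :
  (forall s : 'I_T, (s < t)%N -> a s = a' s /\ forall j, E (a s) j -> l s j = l' s j) ->
  hist_of E l a t = hist_of E l' a' t.
Proof.
move=> h; rewrite /hist_of; apply/eq_in_map => s; rewrite mem_filter => /andP[hs _].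
have [-> hl] := h s hs; congr (_, _); rewrite /observation.
apply/eq_in_map => j; rewrite mem_filter => /andP[hj _]; congr (_, _).
by apply: hl; move: hj; rewrite -(h s hs).1.
Qed.

Section Concrete.
Variables (R : realType) (V : finType) (E : rel V) (alg : history V R -> V -> R).
Hypothesis halg : is_player alg.
Variables (c b0 : V).
Hypotheses (nEcc : ~~ E c c) (nEbc : ~~ E b0 c) (hbc : b0 != c).
Variable T : nat.
Variable eps : R.
Hypotheses (heps : 0 < eps) (heps2 : 2 * eps < 1).

Local Notation FF := {ffun 'I_T -> V * bool}.

Definition lossf (bits : 'I_T -> bool) : 'I_T -> V -> R :=
  fun t v => if v == c then (bits t)%:R else if v == b0 then 2^-1 else 1.
Definition az (z : FF) : {ffun 'I_T -> V} := [ffun t => (z t).1].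
Definition bz (z : FF) : {ffun 'I_T -> bool} := [ffun t => (z t).2].
Definition hz (z : FF) t := hist_of E (lossf (bz z)) (az z) t.
Definition w (s : R) (b : bool) : R := if b then 2^-1 - s * eps else 2^-1 + s * eps.
Definition Kmu s t z (x : V * bool) : R := alg (hz z t) x.1 * w s x.2.
Definition Knu s t z (x : V * bool) : R :=
  alg (hz z t) x.1 * (if E x.1 c then w s x.2 else 2^-1).
Definition qo (x : V * bool) : V * bool := (x.1, E x.1 c && x.2).

Lemma hz_q (t : 'I_T) (z z' : FF) : (forall s : 'I_T, (s < t)%N -> qo (z s) = qo (z' s)) ->
  hz z t = hz z' t.
Proof.
move=> h; apply: hist_of_eq => s hs; have := h s hs; rewrite /qo !ffunE.
case=> e1 e2; split => // j hj; rewrite /lossf.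
case: (eqVneq j c) => [hjc|//]; subst j; rewrite !ffunE.
by move: e2; rewrite -e1 hj /= => ->.
Qed.

Lemma qad_mu s : qadapted qo (Kmu s).
Proof. by move=> t z z' h x; rewrite /Kmu (hz_q h). Qed.
Lemma qad_nu s : qadapted qo (Knu s).
Proof. by move=> t z z' h x; rewrite /Knu (hz_q h). Qed.

Lemma sum_pair (F : V * bool -> R) :
  \sum_(x : V * bool) F x = \sum_v (F (v, true) + F (v, false)).
Proof.
symmetry; transitivity (\sum_v \sum_b F (v, b)).
  by apply: eq_bigr => v _; rewrite big_bool.
by rewrite pair_big; apply: eq_big => // [[v b]].
Qed.

Lemma w_sum s : w s true + w s false = 1.
Proof. rewrite /w; lra. Qed.

Lemma alg_sum h : \sum_v alg h v = 1.
Proof. exact: halg.2. Qed.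

Lemma norm_mu s : normed (Kmu s).
Proof.
move=> t z; rewrite sum_pair /Kmu /=.
rewrite -[RHS](alg_sum (hz z t)); apply: eq_bigr => v _.
by rewrite -mulrDr w_sum mulr1.
Qed.

Lemma norm_nu s : normed (Knu s).
Proof.
move=> t z; rewrite sum_pair /Knu /=.
rewrite -[RHS](alg_sum (hz z t)); apply: eq_bigr => v _.
rewrite -mulrDr; case: (E v c); first by rewrite w_sum mulr1.
have -> : (2^-1 + 2^-1 : R) = 1 by lra.
by rewrite mulr1.
Qed.

Lemma push s t z (phi : V * bool -> R) :
  (forall x x', qo x = qo x' -> phi x = phi x') ->
  \sum_x Kmu s t z x * phi x = \sum_x Knu s t z x * phi x.
Proof.
move=> hphi.
rewrite sum_pair [RHS]sum_pair /Kmu /Knu /=.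
apply: eq_bigr => v _; case hv: (E v c) => //.
have -> : phi (v, true) = phi (v, false) by apply: hphi; rewrite /qo /= hv.
rewrite /= -!mulrA -!mulrDr -!mulrDl w_sum; congr (_ * _).
lra.
Qed.


Definition Kp (l : 'I_T -> V -> R) (t : 'I_T) (a : {ffun 'I_T -> V}) (v : V) : R :=
  alg (hist_of E l a t) v.

Lemma ad_Kp l : adapted (Kp l).
Proof.
move=> t a a' h v; rewrite /Kp (@hist_of_eq R V E T l l a a' t) //.
by move=> s hs; split => //; apply: h.
Qed.

Lemma norm_Kp l : normed (Kp l).
Proof. by move=> t a; rewrite /Kp alg_sum. Qed.

Lemma mass_prob l : \sum_(a : {ffun 'I_T -> V}) prob_actions E l alg a = 1.
Proof. exact: (mass c (ad_Kp l) (norm_Kp l)). Qed.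

Lemma regret_sum l i : regret_against E l alg i =
  \sum_(a : {ffun 'I_T -> V}) prob_actions E l alg a * \sum_(t : 'I_T) (l t (a t) - l t i).
Proof.
rewrite /regret_against /expected_loss /cumulative_loss.
under [RHS]eq_bigr do rewrite sumrB mulrBr.
by rewrite sumrB -big_distrl /= mass_prob mul1r.
Qed.

Lemma sum_split (F : {ffun 'I_T -> V} -> {ffun 'I_T -> bool} -> R) :
  \sum_(bits : {ffun 'I_T -> bool}) \sum_(a : {ffun 'I_T -> V}) F a bits =
  \sum_(z : FF) F (az z) (bz z).
Proof.
rewrite pair_big /=.
pose h (z : FF) := (bz z, az z).
pose g (p : {ffun 'I_T -> bool} * {ffun 'I_T -> V}) : FF := [ffun t => (p.2 t, p.1 t)].
have hg : cancel h g.
  by move=> z; apply/ffunP => t; rewrite /g /h /= !ffunE; case: (z t).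
have gh : cancel g h.
  by move=> [bb aa]; rewrite /g /h /bz /az; congr (_, _); apply/ffunP => t; rewrite !ffunE.
rewrite (reindex h); last by apply: onW_bij; exists g.
by apply: eq_big.
Qed.

Definition lo (x : V * bool) : R :=
  if x.1 == c then (x.2)%:R else if x.1 == b0 then 2^-1 else 1.

Lemma avg_eq s i :
  \sum_(bits : {ffun 'I_T -> bool}) (\prod_(t : 'I_T) w s (bits t)) *
      regret_against E (lossf bits) alg i =
  \sum_(z : FF) mu (Kmu s) z * \sum_(t : 'I_T) (lo (z t) - lo (i, (z t).2)).
Proof.
under eq_bigr do rewrite regret_sum big_distrr /=.
rewrite sum_split; apply: eq_bigr => z _.
rewrite mulrA; congr (_ * _).
  rewrite /mu /prob_actions -big_split /=; apply: eq_bigr => t _.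
  by rewrite /Kmu /hz !ffunE mulrC.
by apply: eq_bigr => t _; rewrite /lossf /lo !ffunE.
Qed.


Lemma kmu_sum s t z (f : V * bool -> R) (g : V -> R) :
  (forall v, w s true * f (v, true) + w s false * f (v, false) = g v) ->
  \sum_x Kmu s t z x * f x = \sum_x Kmu s t z x * g x.1.
Proof.
move=> h; rewrite sum_pair [RHS]sum_pair /Kmu /=; apply: eq_bigr => v _.
rewrite -h /w; set a := alg _ _; set ft := f (v, true); set ff := f (v, false).
have e : 2^-1 - s * eps + (2^-1 + s * eps) = 1 by lra.
transitivity (a * (2^-1 - s * eps + (2^-1 + s * eps)) *
  ((2^-1 - s * eps) * ft + (2^-1 + s * eps) * ff)); last by ring.
by rewrite e; ring.
Qed.

Lemma knu_sum s t z (f : V * bool -> R) (g : V -> R) :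
  (forall v, (if E v c then w s true * f (v, true) + w s false * f (v, false)
              else 2^-1 * (f (v, true) + f (v, false))) = g v) ->
  \sum_x Knu s t z x * f x = \sum_x Knu s t z x * g x.1.
Proof.
move=> h; rewrite sum_pair [RHS]sum_pair /Knu /=; apply: eq_bigr => v _.
rewrite -h /w; set a := alg _ _; set ft := f (v, true); set ff := f (v, false).
have e : 2^-1 - s * eps + (2^-1 + s * eps) = 1 by lra.
case: (E v c).
  transitivity (a * (2^-1 - s * eps + (2^-1 + s * eps)) *
    ((2^-1 - s * eps) * ft + (2^-1 + s * eps) * ff)); last by ring.
  by rewrite e; ring.
have e2 : (2^-1 + 2^-1 : R) = 1 by lra.
transitivity (a * (2^-1 + 2^-1) * (2^-1 * (ft + ff))); last by ring.
by rewrite e2; ring.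
Qed.

Definition d_plus (v : V) : R := if v == b0 then eps else if v == c then 0 else 2^-1 + eps.
Definition d_minus (v : V) : R := if v == b0 then 0 else if v == c then eps else 2^-1.

Lemma round_plus (t : 'I_T) :
  \sum_(z : FF) mu (Kmu 1) z * (lo (z t) - lo (c, (z t).2)) =
  \sum_(z : FF) mu (Kmu 1) z * d_plus (z t).1.
Proof.
have H := @tower_eq _ _ _ (c, false) _ (qad_ad (qad_mu 1)) (norm_mu 1) t (fun x => lo x - lo (c, x.2)) (fun x => d_plus x.1).
apply: H => z. apply: kmu_sum => v; rewrite /lo /d_plus /w /=.
have cc : (c == c) = true by apply/eqP.
rewrite cc.
case: (eqVneq v b0) => [->|hb]; first by rewrite (negbTE hbc); lra.
case: (eqVneq v c) => [hvc|hc]; first by subst v; rewrite ?cc ?(negbTE hb); lra.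
by rewrite ?(negbTE hb) ?(negbTE hc); lra.
Qed.

Lemma round_minus (t : 'I_T) :
  \sum_(z : FF) mu (Kmu (-1)) z * (lo (z t) - lo (b0, (z t).2)) =
  \sum_(z : FF) mu (Kmu (-1)) z * d_minus (z t).1.
Proof.
have H := @tower_eq _ _ _ (c, false) _ (qad_ad (qad_mu (-1))) (norm_mu (-1)) t (fun x => lo x - lo (b0, x.2)) (fun x => d_minus x.1).
apply: H => z; apply: kmu_sum => v; rewrite /lo /d_minus /w /=.
have bb : (b0 == b0) = true by apply/eqP.
rewrite ?bb ?(negbTE hbc).
case: (eqVneq v b0) => [->|hb]; first by rewrite ?bb ?(negbTE hbc); lra.
case: (eqVneq v c) => [hvc|hc]; first by subst v; rewrite ?eqxx ?(negbTE hb); lra.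
by rewrite ?(negbTE hb) ?(negbTE hc); lra.
Qed.


Lemma exch (K : 'I_T -> FF -> V * bool -> R) (f : 'I_T -> V * bool -> R) :
  \sum_(z : FF) mu K z * \sum_(t : 'I_T) f t (z t) =
  \sum_(t : 'I_T) \sum_(z : FF) mu K z * f t (z t).
Proof. by under eq_bigr do rewrite big_distrr; rewrite exchange_big. Qed.

Definition Tb (z : FF) : R := \sum_(t : 'I_T) ((z t).1 == b0)%:R.
Definition Nn (z : FF) : R := \sum_(t : 'I_T) (((z t).1 != b0) && ((z t).1 != c))%:R.
Definition Nobs (z : FF) : R := \sum_(t : 'I_T) (E (z t).1 c)%:R.

Lemma total_plus :
  \sum_(bits : {ffun 'I_T -> bool}) (\prod_(t : 'I_T) w 1 (bits t)) *
      regret_against E (lossf bits) alg c =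
  \sum_(z : FF) mu (Knu 1) z * (eps * Tb z + (2^-1 + eps) * Nn z).
Proof.
rewrite avg_eq (exch _ (fun t x => lo x - lo (c, x.2))).
under eq_bigr do rewrite round_plus.
rewrite -(exch _ (fun t x => d_plus x.1)).
rewrite (@cmp _ _ _ (c, false) _ qo _ _ (qad_mu 1) (qad_nu 1) (@push 1)
   (fun z => \sum_(t : 'I_T) d_plus (z t).1)); last first.
  move=> z z' h; apply: eq_bigr => t _; have := h t; rewrite /qo; by case=> ->.
apply: eq_bigr => z _; congr (_ * _).
rewrite /Tb /Nn mulr_sumr mulr_sumr -big_split /=; apply: eq_bigr => t _.
rewrite /d_plus; case: (eqVneq (z t).1 b0) => hb /=; first lra.
case: (eqVneq (z t).1 c) => hc /=; lra.
Qed.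

Lemma total_minus :
  \sum_(bits : {ffun 'I_T -> bool}) (\prod_(t : 'I_T) w (-1) (bits t)) *
      regret_against E (lossf bits) alg b0 =
  \sum_(z : FF) mu (Knu (-1)) z * (eps * (T%:R - Tb z) + (2^-1 - eps) * Nn z).
Proof.
rewrite avg_eq (exch _ (fun t x => lo x - lo (b0, x.2))).
under eq_bigr do rewrite round_minus.
rewrite -(exch _ (fun t x => d_minus x.1)).
rewrite (@cmp _ _ _ (c, false) _ qo _ _ (qad_mu (-1)) (qad_nu (-1)) (@push (-1))
   (fun z => \sum_(t : 'I_T) d_minus (z t).1)); last first.
  move=> z z' h; apply: eq_bigr => t _; have := h t; rewrite /qo; by case=> ->.
apply: eq_bigr => z _; congr (_ * _).
have -> : (T%:R : R) = \sum_(t : 'I_T) 1 by rewrite sumr_const card_ord.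
rewrite /Tb /Nn -sumrB mulr_sumr mulr_sumr -big_split /=; apply: eq_bigr => t _.
rewrite /d_minus; case: (eqVneq (z t).1 b0) => hb /=; first lra.
case: (eqVneq (z t).1 c) => hc /=; lra.
Qed.


Lemma w1_gt0 b : 0 < w 1 b.
Proof. rewrite /w; case: b; have := heps2; have := heps; lra. Qed.
Lemma wm_gt0 b : 0 < w (-1) b.
Proof. rewrite /w; case: b; have := heps2; have := heps; lra. Qed.

Definition rho (x : V * bool) : R := if E x.1 c then w (-1) x.2 / w 1 x.2 else 1.

Lemma rho_gt0 x : 0 < rho x.
Proof.
rewrite /rho; case: (E x.1 c) => //; apply: divr_gt0; [exact: wm_gt0|exact: w1_gt0].
Qed.

Lemma knu_ratio t z x : Knu (-1) t z x = Knu 1 t z x * rho x.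
Proof.
rewrite /Knu /rho; case: (E x.1 c); last by rewrite mulr1.
rewrite -mulrA; congr (_ * _); rewrite mulrC divfK //.
exact: lt0r_neq0 (w1_gt0 _).
Qed.

Lemma q_eq (z : FF) : mu (Knu (-1)) z = mu (Knu 1) z * \prod_(t : 'I_T) rho (z t).
Proof. by rewrite /mu -big_split; apply: eq_bigr => t _; rewrite knu_ratio. Qed.

Lemma ln_prod (F : 'I_T -> R) : (forall t, 0 < F t) ->
  ln (\prod_(t : 'I_T) F t) = \sum_(t : 'I_T) ln (F t).
Proof.
move=> hF.
suff : 0 < \prod_(t : 'I_T) F t /\ ln (\prod_(t : 'I_T) F t) = \sum_(t : 'I_T) ln (F t).
  by case.
apply: (big_rec2 (fun y1 y2 => 0 < y1 /\ ln y1 = y2)); first by split; [exact: ltr01|exact: ln1].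
move=> i y1 y2 _ [h1 h2]; split; first by apply: mulr_gt0.
by rewrite lnM ?posrE // h2.
Qed.


Definition Lg : R := ln (w (-1) true / w 1 true).
Definition Lam (z : FF) : R := \sum_(t : 'I_T) ln (rho (z t)).

Lemma Lg_false : ln (w (-1) false / w 1 false) = - Lg.
Proof.
have e1 : w (-1) false = w 1 true by rewrite /w; ring.
have e2 : w 1 false = w (-1) true by rewrite /w; ring.
rewrite e1 e2 /Lg -lnV ?posrE ?invf_div //.
by apply: divr_gt0; [exact: wm_gt0|exact: w1_gt0].
Qed.

Lemma E_lam s : \sum_(z : FF) mu (Knu s) z * Lam z =
  ((w s true - w s false) * Lg) * \sum_(z : FF) mu (Knu s) z * Nobs z.
Proof.
rewrite /Lam (exch _ (fun t x => ln (rho x))) /Nobs (exch _ (fun t x => (E x.1 c)%:R)).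
rewrite mulr_sumr; apply: eq_bigr => t _; rewrite mulr_sumr.
transitivity (\sum_(z : FF) mu (Knu s) z * ((w s true - w s false) * Lg * (E (z t).1 c)%:R));
  last by apply: eq_bigr => z _; ring.
have H := @tower_eq _ _ _ (c, false) _ (qad_ad (qad_nu s)) (norm_nu s) t
  (fun x => ln (rho x)) (fun x => (w s true - w s false) * Lg * (E x.1 c)%:R).
apply: H => z.
apply: (@knu_sum s t z _ (fun v => (w s true - w s false) * Lg * (E v c)%:R)) => v.
rewrite /rho /=.
case: (E v c) => /=; last by rewrite ln1; ring.
by rewrite Lg_false -/Lg; ring.
Qed.

Lemma Lg_ge0 : 0 <= Lg.
Proof.
rewrite /Lg; apply: ln_ge0; rewrite ler_pdivlMr ?w1_gt0 // mul1r /w.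
by have := heps; lra.
Qed.

Lemma Lg_le : Lg <= 4 * eps / (1 - 2 * eps).
Proof.
have hx : 0 < w (-1) true / w 1 true by apply: divr_gt0; [exact: wm_gt0|exact: w1_gt0].
apply: (le_trans (ln_le_sub1 hx)).
have h1 : 2^-1 - 1 * eps != 0 by apply: lt0r_neq0; have := heps2; lra.
have h2 : 1 - 2 * eps != 0 by apply: lt0r_neq0; have := heps2; lra.
by rewrite /w le_eqVlt; apply/orP; left; apply/eqP; field.
Qed.


Lemma knu_ge0 s t z x : (forall b, 0 <= w s b) -> 0 <= Knu s t z x.
Proof.
move=> hw; rewrite /Knu; apply: mulr_ge0; first exact: halg.1.
by case: (E x.1 c) => //; rewrite invr_ge0 ler0n.
Qed.

Lemma mu_ge0 (K : 'I_T -> FF -> V * bool -> R) z :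
  (forall t z x, 0 <= K t z x) -> 0 <= mu K z.
Proof. by move=> h; apply: prodr_ge0 => t _; apply: h. Qed.

Definition pp z := mu (Knu 1) z.
Definition qq z := mu (Knu (-1)) z.

Lemma pp_ge0 z : 0 <= pp z.
Proof. by apply: mu_ge0 => t z' x; apply: knu_ge0 => b; apply: ltW; apply: w1_gt0. Qed.
Lemma qq_ge0 z : 0 <= qq z.
Proof. by apply: mu_ge0 => t z' x; apply: knu_ge0 => b; apply: ltW; apply: wm_gt0. Qed.

Lemma pp_mass : \sum_(z : FF) pp z = 1.
Proof. exact: (mass (c, false) (qad_ad (qad_nu 1)) (norm_nu 1)). Qed.
Lemma qq_mass : \sum_(z : FF) qq z = 1.
Proof. exact: (mass (c, false) (qad_ad (qad_nu (-1))) (norm_nu (-1))). Qed.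

Lemma sum_abs lam : 0 < lam ->
  \sum_(z : FF) `|qq z - pp z| <=
  lam + (\sum_(z : FF) qq z * Lam z - \sum_(z : FF) pp z * Lam z) / (2 * lam).
Proof.
move=> hl.
have hR z : 0 < \prod_(t : 'I_T) rho (z t) by apply: prodr_gt0 => t _; apply: rho_gt0.
have hL z : Lam z = ln (\prod_(t : 'I_T) rho (z t)) by rewrite ln_prod // => t; apply: rho_gt0.
apply: (@le_trans _ _ (\sum_(z : FF) (lam * (qq z + pp z) + (qq z - pp z) * Lam z / lam) / 2)).
  apply: ler_sum => z _; rewrite /qq q_eq -/(pp z) hL; exact: pw (pp_ge0 z) (hR z) hl.
rewrite -mulr_suml big_split /= -mulr_sumr -mulr_suml big_split /= pp_mass qq_mass.
under eq_bigr do rewrite mulrBl.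
rewrite sumrB.
have hl0 : lam != 0 by apply: lt0r_neq0.
set A := \sum_(z : FF) qq z * Lam z; set B := \sum_(z : FF) pp z * Lam z.
rewrite le_eqVlt; apply/orP; left; apply/eqP; field; by [].
Qed.

Lemma Tb_bounds z : 0 <= Tb z <= T%:R.
Proof.
apply/andP; split; first by apply: sumr_ge0 => t _; apply: ler0n.
rewrite -[T in T%:R]card_ord -sumr_const; apply: ler_sum => t _.
by case: (_ == _).
Qed.

Lemma Tb_diff : \sum_(z : FF) qq z * Tb z - \sum_(z : FF) pp z * Tb z <=
  T%:R / 2 * \sum_(z : FF) `|qq z - pp z|.
Proof.
have -> : \sum_(z : FF) qq z * Tb z - \sum_(z : FF) pp z * Tb z =
    \sum_(z : FF) (qq z - pp z) * (Tb z - T%:R / 2).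
  under [RHS]eq_bigr do rewrite mulrBr.
  rewrite sumrB -mulr_suml sumrB qq_mass pp_mass subrr mul0r subr0 -sumrB.
  by apply: eq_bigr => z _; rewrite mulrBl.
rewrite mulr_sumr; apply: ler_sum => z _.
apply: (le_trans (ler_norm _)); rewrite normrM mulrC; apply: ler_wpM2r => //.
have := Tb_bounds z; move=> /andP[h1 h2].
rewrite ler_norml; apply/andP; split; lra.
Qed.

Lemma Nobs_le z : Nobs z <= Nn z.
Proof.
apply: ler_sum => t _; case hv: (E (z t).1 c); last by rewrite ler0n.
have h1 : (z t).1 != c by apply/eqP => e; move: hv; rewrite e (negbTE nEcc).
have h2 : (z t).1 != b0 by apply/eqP => e; move: hv; rewrite e (negbTE nEbc).
by rewrite h1 h2.
Qed.


Lemma avg_main : (0 < T)%N ->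
  eps * T%:R - eps * T%:R * (4 * eps ^+ 3 * T%:R / (1 - 2 * eps) ^+ 2) / 2 <=
  \sum_(bits : {ffun 'I_T -> bool}) (\prod_(t : 'I_T) w 1 (bits t)) *
      regret_against E (lossf bits) alg c +
  \sum_(bits : {ffun 'I_T -> bool}) (\prod_(t : 'I_T) w (-1) (bits t)) *
      regret_against E (lossf bits) alg b0.
Proof.
move=> hT; set lam := 4 * eps ^+ 3 * T%:R / (1 - 2 * eps) ^+ 2.
rewrite total_plus total_minus -/pp -/qq.
have hT0 : 0 < (T%:R : R) by rewrite ltr0n.
have he := heps; have he2 := heps2.
have h12 : 0 < 1 - 2 * eps by have := heps2; lra.
have hlam : 0 < lam.
  rewrite /lam; apply: divr_gt0; last by apply: exprn_gt0.
  by apply: mulr_gt0 => //; apply: mulr_gt0 => //; apply: exprn_gt0.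
set Ap := \sum_(z : FF) pp z * Tb z; set Aq := \sum_(z : FF) qq z * Tb z.
set Np := \sum_(z : FF) pp z * Nn z; set Nq := \sum_(z : FF) qq z * Nn z.
set Op := \sum_(z : FF) pp z * Nobs z; set Oq := \sum_(z : FF) qq z * Nobs z.
set Sab := \sum_(z : FF) `|qq z - pp z|.
have e1 : \sum_(z : FF) pp z * (eps * Tb z + (2^-1 + eps) * Nn z) = eps * Ap + (2^-1 + eps) * Np.
  rewrite /Ap /Np !mulr_sumr -big_split /=; apply: eq_bigr => z _; ring.
have e2 : \sum_(z : FF) qq z * (eps * (T%:R - Tb z) + (2^-1 - eps) * Nn z) =
    eps * T%:R - eps * Aq + (2^-1 - eps) * Nq.
  transitivity (\sum_(z : FF) (eps * T%:R * qq z - eps * (qq z * Tb z) + (2^-1 - eps) * (qq z * Nn z))).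
    by apply: eq_bigr => z _; ring.
  by rewrite big_split sumrB /= -!mulr_sumr qq_mass mulr1.
rewrite e1 e2.
have hD : Aq - Ap <= T%:R / 2 * Sab by exact: Tb_diff.
have hS := sum_abs hlam; rewrite -/Sab in hS.
rewrite (E_lam (-1)) (E_lam 1) -/pp -/qq -/Op -/Oq in hS.
have ew1 : w (-1) true - w (-1) false = 2 * eps by rewrite /w; ring.
have ew2 : w 1 true - w 1 false = - (2 * eps) by rewrite /w; ring.
rewrite ew1 ew2 in hS.
have hOp : Op <= Np by apply: ler_sum => z _; apply: ler_wpM2l; [exact: pp_ge0|exact: Nobs_le].
have hOq : Oq <= Nq by apply: ler_sum => z _; apply: ler_wpM2l; [exact: qq_ge0|exact: Nobs_le].
have hNp : 0 <= Np by apply: sumr_ge0 => z _; apply: mulr_ge0; [exact: pp_ge0|apply: sumr_ge0 => t _; apply: ler0n].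
have hNq : 0 <= Nq by apply: sumr_ge0 => z _; apply: mulr_ge0; [exact: qq_ge0|apply: sumr_ge0 => t _; apply: ler0n].
have hOp0 : 0 <= Op by apply: sumr_ge0 => z _; apply: mulr_ge0; [exact: pp_ge0|apply: sumr_ge0 => t _; apply: ler0n].
have hOq0 : 0 <= Oq by apply: sumr_ge0 => z _; apply: mulr_ge0; [exact: qq_ge0|apply: sumr_ge0 => t _; apply: ler0n].
set kap := 8 * eps ^+ 2 / (1 - 2 * eps).
have hJ : 2 * eps * Lg * Oq - - (2 * eps) * Lg * Op <= kap * (Np + Nq).
  have -> : 2 * eps * Lg * Oq - - (2 * eps) * Lg * Op = (2 * eps) * (Lg * (Op + Oq)) by ring.
  have hL1 : Lg * (Op + Oq) <= Lg * (Np + Nq) by apply: ler_wpM2l; [exact: Lg_ge0|lra].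
  have hL2 : Lg * (Np + Nq) <= (4 * eps / (1 - 2 * eps)) * (Np + Nq).
    by apply: ler_wpM2r; [lra|exact: Lg_le].
  have -> : kap * (Np + Nq) = (2 * eps) * ((4 * eps / (1 - 2 * eps)) * (Np + Nq)).
    by rewrite /kap; field; apply: lt0r_neq0.
  apply: ler_wpM2l; first lra.
  exact: le_trans hL1 hL2.
have hS2 : Sab <= lam + kap * (Np + Nq) / (2 * lam).
  apply: (le_trans hS); rewrite lerD2l; apply: ler_wpM2r => //.
  by rewrite invr_ge0; lra.
have hD2 : eps * (Aq - Ap) <= eps * (T%:R / 2 * (lam + kap * (Np + Nq) / (2 * lam))).
  apply: ler_wpM2l; first lra.
  apply: (le_trans hD); apply: ler_wpM2l => //; lra.
have eid : eps * (T%:R / 2 * (lam + kap * (Np + Nq) / (2 * lam))) =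
    eps * T%:R * lam / 2 + (2^-1 - eps) * (Np + Nq).
  rewrite /kap /lam; field.
  by rewrite !lt0r_neq0.
rewrite eid in hD2.
have : 0 <= eps * Np by apply: mulr_ge0 => //; apply: ltW.
lra.
Qed.


Lemma wsum s : \sum_(bits : {ffun 'I_T -> bool}) \prod_(t : 'I_T) w s (bits t) = 1.
Proof.
rewrite -(bigA_distr_bigA (fun (t : 'I_T) (b : bool) => w s b)) /=.
by apply: big1 => t _; rewrite big_bool /= w_sum.
Qed.

Lemma avg_le s (F : {ffun 'I_T -> bool} -> R) (B : R) :
  (forall b, 0 <= w s b) -> (forall bits, F bits <= B) ->
  \sum_(bits : {ffun 'I_T -> bool}) (\prod_(t : 'I_T) w s (bits t)) * F bits <= B.
Proof.
move=> hw hF.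
apply: (@le_trans _ _ (\sum_(bits : {ffun 'I_T -> bool}) (\prod_(t : 'I_T) w s (bits t)) * B)).
  apply: ler_sum => bits _; apply: ler_wpM2l => //; apply: prodr_ge0 => t _; exact: hw.
by rewrite -mulr_suml wsum mul1r.
Qed.

Lemma lossf_ok bits : is_loss_seq (lossf bits).
Proof.
move=> t v; rewrite /lossf; case: (v == c); first by case: (bits t); rewrite ?ler01 ?lexx.
case: (v == b0); last by rewrite ler01 lexx.
by apply/andP; split; lra.
Qed.


Definition lsmall (u : V) : 'I_T -> V -> R :=
  fun t v => if (val t == 0)%N then (v != u)%:R else 0.

Lemma lsmall_ok u : is_loss_seq (lsmall u).
Proof.
move=> t v; rewrite /lsmall; case: (_ == _)%N; last by rewrite lexx ler01.
by case: (v != u); rewrite ?lexx ?ler01.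
Qed.

Lemma small_regret u (hT : (0 < T)%N) :
  regret_against E (lsmall u) alg u = 1 - alg [::] u.
Proof.
rewrite regret_sum; set t0 := Ordinal hT.
have e a : \sum_(t : 'I_T) (lsmall u t (a t) - lsmall u t u) = (a t0 != u)%:R.
  rewrite (bigD1 t0) //= big1 ?addr0.
    by rewrite /lsmall /= eqxx subr0.
  move=> t ht; rewrite /lsmall; case: eqP => h; last by rewrite subr0.
  by exfalso; move/eqP: ht; apply; apply: val_inj.
under eq_bigr do rewrite e.
transitivity (\sum_(a : {ffun 'I_T -> V}) mu (Kp (lsmall u)) a * (fun v => (v != u)%:R : R) (a t0)).
  by [].
have hh a : hist_of E (lsmall u) a t0 = [::].
  by rewrite /hist_of (@eq_filter _ _ pred0) ?filter_pred0.
rewrite (@tower_eq _ _ _ c _ (ad_Kp (lsmall u)) (norm_Kp (lsmall u)) t0 (fun v => (v != u)%:R) (fun _ => 1 - alg [::] u)).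
  by rewrite -big_distrl /= (mass c (ad_Kp _) (norm_Kp _)) mul1r.
move=> a; rewrite -big_distrl /= norm_Kp mul1r /Kp hh.
rewrite (bigD1 u) //= eqxx mulr0 add0r.
have := alg_sum [::]; rewrite (bigD1 u) //= => hs.
have -> : 1 - alg [::] u = \sum_(v | v != u) alg [::] v by rewrite -hs addrAC subrr add0r.
by apply: eq_bigr => v hv; rewrite hv mulr1.
Qed.

Lemma two_le h : alg h b0 + alg h c <= 1.
Proof.
have := alg_sum h; rewrite (bigD1 b0) //= (bigD1 c) /=; last by rewrite eq_sym.
move=> hs; rewrite -hs addrA lerDl.
by apply: sumr_ge0 => v _; exact: halg.1.
Qed.

End Concrete.

Unset Implicit Arguments.

Lemma numeric (R : realType) (y : R) : 2 <= y ->
  2 * (y ^+ 2 / 8) < (3 * y)^-1 * y ^+ 3 -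
    (3 * y)^-1 * y ^+ 3 * (4 * (3 * y)^-1 ^+ 3 * y ^+ 3 / (1 - 2 * (3 * y)^-1) ^+ 2) / 2.
Proof.
move=> hy; have hy0 : 0 < y by lra.
set eps := (3 * y)^-1.
have hy3 : 3 * y != 0 by apply: lt0r_neq0; lra.
have e1 : eps * y ^+ 3 = y ^+ 2 / 3 by rewrite /eps; field; apply: lt0r_neq0.
have e2 : 4 * eps ^+ 3 * y ^+ 3 = 4 / 27 by rewrite /eps; field; apply: lt0r_neq0.
have e3 : eps * (3 * y) = 1 by rewrite /eps mulVf.
have he0 : 0 < eps by rewrite /eps invr_gt0; lra.
have h6 : eps <= 6^-1 by nra.
have hq : 4 / 9 <= (1 - 2 * eps) ^+ 2 by rewrite expr2; nra.
have hq0 : 0 < (1 - 2 * eps) ^+ 2 by lra.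
have hlam : 4 * eps ^+ 3 * y ^+ 3 / (1 - 2 * eps) ^+ 2 <= 3^-1.
  by rewrite e2 ler_pdivrMr //; lra.
rewrite e1.
have hy2 : 0 < y ^+ 2 by apply: exprn_gt0.
have : y ^+ 2 / 3 * (4 * eps ^+ 3 * y ^+ 3 / (1 - 2 * eps) ^+ 2) <= y ^+ 2 / 3 * 3^-1.
  by apply: ler_wpM2l => //; lra.
lra.
Qed.

Theorem theorem11 (R : realType) (V : finType) (E : rel V)
    (hweak : weakly_observable_graph E) (hV : (2 <= #|V|)%N)
    (alg : history V R -> V -> R) (halg : is_player alg) (T : nat) :
  exists losses : 'I_T -> V -> R,
    is_loss_seq losses /\
    exists i : V,
      regret_against E losses alg i >= (T%:R `^ (2 / 3)) / 8.
Proof.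
move: hweak => /andP[_ hns].
have [c hc] : exists c, ~~ strongly_observable E c.
  by apply/existsP; move: hns; rewrite negb_forall.
move: hc; rewrite /strongly_observable negb_or => /andP[hcc hsub].
have nEcc : ~~ E c c by move: hcc; rewrite /N_in inE.
case/subsetPn: hsub => b0; rewrite in_setD1 => /andP[hbc _].
rewrite /N_in inE => nEbc.
set y := (T%:R : R) `^ (3^-1).
have hy0 : 0 <= y by apply: powR_ge0.
have hyT : y ^+ 3 = T%:R.
  rewrite -powR_mulrn // -powRrM mulVf ?powRr1 ?ler0n //.
  by rewrite pnatr_eq0.
have -> : (T%:R : R) `^ (2 / 3) = y ^+ 2.
  by rewrite -powR_mulrn // -powRrM mulrC.
case: (ltnP T 8) => hT8.
  case: (posnP T) => hT0.
    subst T; exists (fun _ _ => 0); split; first by move=> t i; rewrite lexx ler01.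
    exists c; rewrite /regret_against /expected_loss /cumulative_loss.
    under eq_bigr do rewrite big_ord0 mulr0.
    rewrite big_ord0 big1 // subr0.
    have : y ^+ 3 = 0 by rewrite hyT.
    move/eqP; rewrite expf_eq0 /= => /eqP ->; rewrite expr0n /= mul0r lexx //.
  have hyl : y < 2.
    have hT7 : (T%:R : R) <= 7 by rewrite (ler_nat R T 7); rewrite -ltnS.
    rewrite -hyT in hT7; nra.
  have hB : y ^+ 2 / 8 <= 2^-1 by rewrite expr2; nra.
  have := two_le halg hbc [::].
  case: (lerP (alg [::] b0) 2^-1) => hu.
    move=> _; exists (@lsmall R V T b0); split; first exact: lsmall_ok.
    exists b0; rewrite (small_regret E halg c b0 hT0); lra.
  move=> h2; exists (@lsmall R V T c); split; first exact: lsmall_ok.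
  exists c; rewrite (small_regret E halg c c hT0); lra.
have hy2 : 2 <= y.
  have hT8' : (8 : R) <= T%:R by rewrite (ler_nat R 8 T).
  rewrite -hyT in hT8'; nra.
set eps := (3 * y)^-1.
have heps : 0 < eps by rewrite /eps invr_gt0; lra.
have heps2 : 2 * eps < 1.
  have e3 : eps * (3 * y) = 1 by rewrite /eps mulVf //; apply: lt0r_neq0; lra.
  nra.
have hT : (0 < T)%N by apply: leq_trans hT8.
have hM := avg_main halg nEcc nEbc hbc heps heps2 hT.
have hnum := @numeric R y hy2; rewrite -/eps hyT in hnum.
set B := y ^+ 2 / 8.
case: (boolP [exists bits : {ffun 'I_T -> bool},
   (B <= regret_against E (lossf R c b0 bits) alg c) ||
   (B <= regret_against E (lossf R c b0 bits) alg b0)]).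
  case/existsP => bits /orP[h|h]; exists (lossf R c b0 bits); split;
    try exact: lossf_ok; [by exists c|by exists b0].
rewrite negb_exists => /forallP hall; exfalso.
have h1 : \sum_(bits : {ffun 'I_T -> bool}) (\prod_(t : 'I_T) w eps 1 (bits t)) *
      regret_against E (lossf R c b0 bits) alg c <= B.
  apply: avg_le => [b|bits]; first exact: ltW (w1_gt0 heps heps2 b).
  by have := hall bits; rewrite negb_or => /andP[h _]; rewrite leNgt; apply/negP => /ltW; move: h => /negP.
have h2 : \sum_(bits : {ffun 'I_T -> bool}) (\prod_(t : 'I_T) w eps (-1) (bits t)) *
      regret_against E (lossf R c b0 bits) alg b0 <= B.
  apply: avg_le => [b|bits]; first exact: ltW (wm_gt0 heps heps2 b).
  by have := hall bits; rewrite negb_or => /andP[_ h]; rewrite leNgt; apply/negP => /ltW; move: h => /negP.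
rewrite /B in h1 h2.
lra.
Qed.
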